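(* Let $p>5$ be prime, $q=p^h$, $n>3$, and let $\mathcal{F}: aX^n+bY^n=Z^n$ be an irreducible Fermat curve over $\mathbb{F}_q$. Suppose $p$ divides $n+1$. Then $\mathcal{F}$ is $\mathbb{F}_q$-Frobenius nonclassical with respect to $\Sigma_2$ if and only if $a+b=1$ and $n=q-1$.
   Context: $\Sigma_2$ is the linear system of plane conics. The function field of $\mathcal{F}$ is $\overline{\mathbb{F}}_q(x,y)$ with $ax^n+by^n=1$; $t$ is a separating variable and $D_t^{(r)}$ the $r$-th Hasse derivative. The $\mathbb{F}_q$-Frobenius sequence $(\nu_0,\dots,\nu_4)$ of $\mathcal{F}$ w.r.t. $\Sigma_2$ is the lexicographically minimal increasing sequence of nonnegative integers such that the $6\times6$ determinant, with columns indexed by monomials $x^iy^j$ ($0\le i+j\le2$), first row $((x^iy^j)^q)$ and $(k+2)$-th row $(D_t^{(\nu_k)}(x^iy^j))$, is nonzero; $\mathcal{F}$ is $\mathbb{F}_q$-Frobenius nonclassical w.r.t. $\Sigma_2$ if $(\nu_0,\dots,\nu_4)\neq(0,1,2,3,4)$. *)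

(* Defs.v *)
From HB Require Import structures.
From mathcomp Require Import all_boot all_order all_algebra all_field.
From mathcomp Require Import mpoly.
Set Implicit Arguments. Unset Strict Implicit. Unset Printing Implicit Defensive.
Import Order.TTheory GRing.Theory.
Local Open Scope ring_scope.

(* K is (isomorphic to) the algebraic closure of F_p:
   an algebraically closed field of characteristic p all of whose elements
   are fixed by some positive power of the Frobenius. *)
Definition is_alg_closure_Fp (p : nat) (K : closedFieldType) : Prop :=
  p \in [pchar K] /\ forall z : K, exists k : nat, (0 < k)%N /\ z ^+ (p ^ k) = z.

Definition mpoly_irreducible (R : fieldType) (k : nat) (P : {mpoly R[k]}) : Prop :=
  (1 < msize P)%N /\
  forall Q S : {mpoly R[k]}, P = Q * S -> (msize Q <= 1)%N \/ (msize S <= 1)%N.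

Definition fermat_poly (R : fieldType) (a b : R) (n : nat) : {mpoly R[3]} :=
  a *: 'X_(0 : 'I_3) ^+ n + b *: 'X_(1 : 'I_3) ^+ n - 'X_(2 : 'I_3) ^+ n.

Definition transcendental_over (K L : fieldType) (iota : {rmorphism K -> L})
  (x : L) : Prop :=
  forall P : {poly K}, P != 0 -> (map_poly iota P).[x] != 0.

Definition hasse_derivation (K L : fieldType) (iota : {rmorphism K -> L})
  (t : L) (D : nat -> L -> L) : Prop :=
  [/\ forall f, D 0%N f = f,
      forall r f g, D r (f + g) = D r f + D r g,
      forall r f g, D r (f * g) = \sum_(i < r.+1) D i f * D (r - i)%N g,
      forall r c, (0 < r)%N -> D r (iota c) = 0 &
      D 1%N t = 1 /\ forall r, (1 < r)%N -> D r t = 0].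

Definition conic_monomials (L : fieldType) (x y : L) : seq L :=
  [:: 1; x; y; x ^+ 2; x * y; y ^+ 2].

Definition frob_matrix (L : fieldType) (q : nat) (D : nat -> L -> L) (x y : L)
  (nu : 'I_5 -> nat) : 'M[L]_6 :=
  \matrix_(i < 6, j < 6)
    (if unlift ord0 i is Some k then D (nu k) (nth 0 (conic_monomials x y) j)
     else (nth 0 (conic_monomials x y) j) ^+ q).

Definition strictly_increasing5 (nu : 'I_5 -> nat) : Prop :=
  forall i j : 'I_5, (i < j)%N -> (nu i < nu j)%N.

Definition frob_admissible (L : fieldType) (q : nat) (D : nat -> L -> L)
  (x y : L) (nu : 'I_5 -> nat) : Prop :=
  strictly_increasing5 nu /\ \det (frob_matrix q D x y nu) != 0.

Definition lex_le5 (nu mu : 'I_5 -> nat) : Prop :=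
  (forall i, nu i = mu i) \/
  exists k : 'I_5, (forall i : 'I_5, (i < k)%N -> nu i = mu i) /\ (nu k < mu k)%N.

Definition is_frobenius_sequence (L : fieldType) (q : nat) (D : nat -> L -> L)
  (x y : L) (nu : 'I_5 -> nat) : Prop :=
  frob_admissible q D x y nu /\
  forall mu, frob_admissible q D x y mu -> lex_le5 nu mu.

Definition classical_seq : 'I_5 -> nat := fun i => nat_of_ord i.

Definition frobenius_nonclassical (L : fieldType) (q : nat) (D : nat -> L -> L)
  (x y : L) : Prop :=
  ~ is_frobenius_sequence q D x y classical_seq.

(* Main.v *)
Require Import Defs.
From HB Require Import structures.
From mathcomp Require Import all_boot all_order all_algebra all_field.
From mathcomp Require Import mpoly.
From mathcomp Require Import ring zify.
Set Implicit Arguments. Unset Strict Implicit. Unset Printing Implicit Defensive.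
Import GRing.Theory.
Local Open Scope ring_scope.

Definition Hadd (L : fieldType) (D : nat -> L -> L) :=
  forall r f g, D r (f + g) = D r f + D r g.
Definition Hmul (L : fieldType) (D : nat -> L -> L) :=
  forall r f g, D r (f * g) = \sum_(i < r.+1) D i f * D (r - i)%N g.
Definition dconst (L : fieldType) (D : nat -> L -> L) (f : L) :=
  forall i, (0 < i)%N -> (i < 5)%N -> D i f = 0.

Lemma D0z (L : fieldType) (D : nat -> L -> L) r : Hadd D -> D r 0 = 0.
Proof. by move=> HA; apply: (addrI (D r 0)); rewrite -HA !addr0. Qed.

Lemma DN (L : fieldType) (D : nat -> L -> L) r f : Hadd D -> D r (- f) = - D r f.
Proof. move=> HA; apply/eqP; rewrite -subr_eq0 opprK -HA addNr D0z //. Qed.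

Lemma DB (L : fieldType) (D : nat -> L -> L) r f g : Hadd D -> D r (f - g) = D r f - D r g.
Proof. by move=> HA; rewrite HA DN. Qed.

Lemma D_mulc (L : fieldType) (D : nat -> L -> L) r f g :
  Hmul D -> D 0%N f = f -> dconst D f -> (r < 5)%N -> D r (f * g) = f * D r g.
Proof.
move=> HM H0 Hc Hr; rewrite HM big_ord_recl /= H0 subn0 big1 ?addr0 // => i _.
by rewrite Hc ?mul0r //= ltnS (leq_trans (ltn_ord i)) // -ltnS.
Qed.

Lemma dconstM (L : fieldType) (D : nat -> L -> L) f g :
  Hmul D -> D 0%N f = f -> dconst D f -> dconst D g -> dconst D (f * g).
Proof. by move=> HM H0 Hf Hg i i0 i5; rewrite D_mulc // Hg // mulr0. Qed.

Lemma Dx_mul (L : fieldType) (D : nat -> L -> L) x r g :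
  Hmul D -> D 0%N x = x -> D 1%N x = 1 -> (forall r, (1 < r)%N -> D r x = 0) ->
  D r.+1 (x * g) = x * D r.+1 g + D r g.
Proof.
move=> HM H0 H1 H2; rewrite HM big_ord_recl /= H0 subn0 big_ord_recl /= H1 mul1r.
rewrite subSS subn0 big1 ?addr0 // => i _.
by rewrite H2 ?mul0r.
Qed.

Lemma D1X (L : fieldType) (D : nat -> L -> L) f k :
  Hmul D -> (forall g, D 0%N g = g) -> D 1%N 1 = 0 ->
  D 1%N (f ^+ k) = k%:R * f ^+ k.-1 * D 1%N f.
Proof.
move=> HM H0 H1; elim: k => [|k IH]; first by rewrite expr0 H1 !mul0r.
rewrite exprS HM !big_ord_recl big_ord0 /= /bump /= ?subn0 ?addn0 !H0 IH addr0 /=.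
case: k {IH} => [|k] /=; rewrite /bump /=; first by rewrite expr0; ring.
rewrite exprS -[k.+2]addn1 natrD; ring.
Qed.

Definition phi (L : fieldType) (D : nat -> L -> L) (f : L) : {poly L} :=
  \poly_(i < 5) D i f.

Lemma coefM_low (L : fieldType) (P Q P' Q' : {poly L}) i :
  (forall j, (j <= i)%N -> P`_j = P'`_j) -> (forall j, (j <= i)%N -> Q`_j = Q'`_j) ->
  (P * Q)`_i = (P' * Q')`_i.
Proof.
move=> HP HQ; rewrite !coefM; apply: eq_bigr => j _.
by rewrite HP ?HQ ?leq_subr // -ltnS.
Qed.

Lemma phiX (L : fieldType) (D : nat -> L -> L) f k i :
  Hmul D -> (forall g, D 0%N g = g) -> (forall r, (0 < r)%N -> D r 1 = 0) -> (i < 5)%N ->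
  D i (f ^+ k) = (phi D f ^+ k)`_i.
Proof.
move=> HM H0 H1; elim: k i => [|k IH] i Hi.
  rewrite !expr0 coefC; case: i Hi => [|i] Hi /=; first by rewrite H0.
  by rewrite H1.
rewrite exprS HM [phi D f ^+ _.+1]exprS coefM; apply: eq_bigr => j _.
have Hj : (j < 5)%N by apply: leq_trans (ltn_ord j) _.
rewrite coef_poly Hj IH //; apply: leq_ltn_trans Hi; exact: leq_subr.
Qed.

Lemma D_frob (L : fieldType) (D : nat -> L -> L) (p : nat) f k i :
  Hmul D -> (forall g, D 0%N g = g) -> (forall r, (0 < r)%N -> D r 1 = 0) ->
  p \in [pchar L] -> (4 < p)%N -> (0 < i)%N -> (i < 5)%N ->
  D i (f ^+ (p * k)) = 0.
Proof.
move=> HM H0 H1 Hp p4 i0 i5.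
rewrite (phiX _ _ HM H0 H1 i5).
set Q : {poly L} := \poly_(i < 4) D i.+1 f.
have Hphi : phi D f = f%:P + 'X * Q.
  apply/polyP => j; rewrite coefD coefC coefXM !coef_poly.
  case: j => [|j] /=; first by rewrite H0 addr0.
  by rewrite add0r.
have HpP : p \in [pchar {poly L}] by rewrite pchar_poly.
have Hfr : phi D f ^+ p = (f ^+ p)%:P + 'X^p * Q ^+ p.
  rewrite Hphi exprDn_pchar; last first.
    by rewrite (eq_pnat _ (pcharf_eq HpP)) pnat_id // (pcharf_prime Hp).
  by rewrite -polyC_exp exprMn.
have Hk : forall k, exists R, ((f ^+ p)%:P + 'X^p * Q ^+ p) ^+ k = (f ^+ (p * k))%:P + 'X^p * R.
  elim=> [|k' [R HR]]; first by exists 0; rewrite expr0 muln0 expr0 mulr0 addr0.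
  exists ((f ^+ (p * k'))%:P * Q ^+ p + R * (f ^+ p)%:P + R * 'X^p * Q ^+ p).
  rewrite exprS HR mulnS exprD polyCM; ring.
have [R HR] := Hk k.
rewrite exprM Hfr HR coefD coefC coefXnM.
by rewrite (negbTE (lt0n_neq0 i0)) add0r (leq_trans i5 p4).
Qed.

Lemma osc_rel (L : fieldType) (D : nat -> L -> L) x y al be r :
  Hadd D -> Hmul D -> (forall g, D 0%N g = g) ->
  dconst D al -> dconst D be -> x * y = al * y + be * x -> (r < 5)%N ->
  D r (x * y) - al * D r y - be * D r x = 0.
Proof.
move=> HA HM H0 Hal Hbe Hrel Hr.
rewrite -!D_mulc // -!DB //.
have -> : x * y - al * y - be * x = 0 by rewrite Hrel; ring.
exact: D0z.
Qed.

Lemma Dyy (L : fieldType) (D : nat -> L -> L) y :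
  Hmul D -> (forall g, D 0%N g = g) ->
  [/\ D 1%N (y * y) = 2%:R * y * D 1%N y,
      D 2%N (y * y) = 2%:R * y * D 2%N y + D 1%N y ^+ 2,
      D 3%N (y * y) = 2%:R * y * D 3%N y + 2%:R * D 1%N y * D 2%N y &
      D 4%N (y * y) = 2%:R * y * D 4%N y + 2%:R * D 1%N y * D 3%N y + D 2%N y ^+ 2].
Proof.
move=> HM H0; rewrite !HM.
by split; rewrite !big_ord_recl big_ord0 /= /bump /= ?subSS ?subn0 ?H0 ?addn0 ?add1n ?add2n /=; ring.
Qed.

Lemma from_eq1 (L : comRingType) (l r l1 r1 k1 : L) :
  l1 = r1 -> l - r = k1 * (l1 - r1) -> l = r.
Proof. by move=> H1 E; apply/eqP; rewrite -subr_eq0 E H1 subrr mulr0. Qed.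

Lemma from_eq2 (L : comRingType) (l r l1 r1 l2 r2 k1 k2 : L) :
  l1 = r1 -> l2 = r2 -> l - r = k1 * (l1 - r1) + k2 * (l2 - r2) -> l = r.
Proof. by move=> H1 H2 E; apply/eqP; rewrite -subr_eq0 E H1 H2 !subrr !mulr0 addr0. Qed.

Lemma kernel_lemma (L : fieldType) (D : nat -> L -> L) x y al be v0 v1 v2 v3 v4 v5 :
  Hadd D -> Hmul D -> (forall g, D 0%N g = g) -> (forall r, (0 < r)%N -> D r 1 = 0) ->
  D 1%N x = 1 -> (forall r, (1 < r)%N -> D r x = 0) ->
  dconst D al -> dconst D be -> x * y = al * y + be * x ->
  al != 0 -> be != 0 -> x - al != 0 ->
  (forall r, (r < 5)%N -> v0 * D r 1 + v1 * D r x + v2 * D r y + v3 * D r (x ^+ 2)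
      + v4 * D r (x * y) + v5 * D r (y ^+ 2) = 0) ->
  [/\ v0 = 0, v1 = - v4 * be, v2 = - v4 * al, v3 = 0 & v5 = 0].
Proof.
move=> HA HM H0 H1 Hx1 Hx2 Hal Hbe Hrel al0 be0 w0 Hv.
have Hxy r : (r < 5)%N -> D r (x * y) = al * D r y + be * D r x.
  by move=> Hr; apply/eqP; rewrite -subr_eq0 opprD addrA; apply/eqP; apply: osc_rel.
have Hyr r : (r < 4)%N -> x * D r.+1 y + D r y - al * D r.+1 y = be * D r.+1 x.
  by move=> Hr; rewrite -Dx_mul // ?H0 // Hxy //; ring.
have Hxx r : D r.+1 (x * x) = x * D r.+1 x + D r x by rewrite Dx_mul ?H0.
have [Y1 Y2 Y3 Y4] := Dyy y HM H0.
have E0 := Hv 0%N isT; have E1 := Hv 1%N isT; have E2 := Hv 2%N isT;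
have E3 := Hv 3%N isT; have E4 := Hv 4%N isT.
rewrite !H0 in E0.
move: E1 E2 E3 E4; rewrite !expr2 !Hxy // !Hxx Y1 Y2 Y3 Y4 !H1 // Hx1 !H0 !Hx2 //.
have F1 := Hyr 0%N isT; have F2 := Hyr 1%N isT; have F3 := Hyr 2%N isT; have F4 := Hyr 3%N isT.
rewrite Hx1 !Hx2 // H0 in F1 F2 F3 F4.
set y1 := D 1%N y in F1 F2 *; set y2 := D 2%N y in F2 F3 *;
set y3 := D 3%N y in F3 F4 *; set y4 := D 4%N y in F4 *.
move=> E1 E2 E3 E4.
set w := x - al in w0.
have G2 : w * y2 = - y1 by apply: (from_eq1 F2 (k1 := 1)); rewrite /w; ring.
have G3 : w * y3 = - y2 by apply: (from_eq1 F3 (k1 := 1)); rewrite /w; ring.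
have G4 : w * y4 = - y3 by apply: (from_eq1 F4 (k1 := 1)); rewrite /w; ring.
have G1 : w * y1 = be - y by apply: (from_eq1 F1 (k1 := 1)); rewrite /w; ring.
have Gy : w * y = be * x by apply: (from_eq1 Hrel (k1 := 1)); rewrite /w; ring.
have ey2 : y2 = - y1 / w by apply: (mulfI w0); rewrite G2; field.
have ey3 : y3 = y1 / w ^+ 2 by apply: (mulfI w0); rewrite G3 ey2; field.
have ey4 : y4 = - y1 / w ^+ 3 by apply: (mulfI w0); rewrite G4 ey3; field.
have Gy1 : w ^+ 2 * y1 = - be * al.
  apply: (from_eq2 G1 Gy (k1 := w) (k2 := -1)); rewrite /w; ring.
have y10 : y1 != 0.
  by apply: contraNneq (mulf_neq0 be0 al0) => h; move: Gy1; rewrite h mulr0 mulNr => /eqP; rewrite eq_sym oppr_eq0.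
set Z3 := 2%:R * y * y3 + 2%:R * y1 * y2.
set Z4 := 2%:R * y * y4 + 2%:R * y1 * y3 + y2 ^+ 2.
have hdet : y3 * Z4 - y4 * Z3 = y1 ^+ 3 / w ^+ 4.
  by rewrite /Z3 /Z4 ey4 ey3 ey2; field.
have det0 : y3 * Z4 - y4 * Z3 != 0.
  by rewrite hdet; apply: mulf_neq0; [exact: expf_neq0 | rewrite invr_eq0; exact: expf_neq0].
set W2 := v2 + v4 * al.
have HW2 : W2 * (y3 * Z4 - y4 * Z3) = 0.
  by apply: (from_eq2 E3 E4 (k1 := Z4) (k2 := - Z3)); rewrite /W2 /Z3 /Z4; ring.
have HW5 : v5 * (y3 * Z4 - y4 * Z3) = 0.
  by apply: (from_eq2 E3 E4 (k1 := - y4) (k2 := y3)); rewrite /W2 /Z3 /Z4; ring.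
move: HW2 HW5 => /eqP; rewrite mulf_eq0 (negbTE det0) orbF => /eqP HW2 /eqP.
rewrite mulf_eq0 (negbTE det0) orbF => /eqP HW5.
have Hv3 : v3 = 0.
  apply: (from_eq1 E2 (k1 := 1)).
  have -> : v2 = W2 - v4 * al by rewrite /W2; ring.
  rewrite HW2 HW5; ring.
have Hv1 : v1 = - v4 * be.
  apply: (from_eq1 E1 (k1 := 1)).
  have -> : v2 = W2 - v4 * al by rewrite /W2; ring.
  rewrite HW2 HW5 Hv3; ring.
have Hv0 : v0 = 0.
  apply: (from_eq2 E0 Hrel (k1 := 1) (k2 := - v4)).
  have -> : v2 = W2 - v4 * al by rewrite /W2; ring.
  rewrite HW2 HW5 Hv3 Hv1; ring.
split; [exact: Hv0 | exact: Hv1 | | exact: Hv3 | exact: HW5].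
by apply: (from_eq1 HW2 (k1 := 1)); rewrite /W2; ring.
Qed.

Lemma frob_root (L : fieldType) p j (u v : L) :
  p \in [pchar L] -> u ^+ (p ^ j) = v ^+ (p ^ j) -> u = v.
Proof.
move=> Hp; elim: j u v => [|j IH] u v; first by rewrite expn0 !expr1.
rewrite expnSr !exprM => h; apply: IH; apply/eqP; rewrite -subr_eq0.
have : (u ^+ (p ^ j) - v ^+ (p ^ j)) ^+ p = 0.
  rewrite -(pFrobenius_autE Hp) pFrobenius_autB_comm; last exact: mulrC.
  by rewrite !pFrobenius_autE h subrr.
by move/eqP; rewrite expf_eq0 => /andP[].
Qed.

Lemma from_eq3 (L : comRingType) (l r l1 r1 l2 r2 l3 r3 k1 k2 k3 : L) :
  l1 = r1 -> l2 = r2 -> l3 = r3 ->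
  l - r = k1 * (l1 - r1) + k2 * (l2 - r2) + k3 * (l3 - r3) -> l = r.
Proof. by move=> H1 H2 H3 E; apply/eqP; rewrite -subr_eq0 E H1 H2 H3 !subrr !mulr0 !addr0. Qed.

Lemma no_pow_rel (K L : fieldType) (iota : {rmorphism K -> L}) (x y : L) (a b c1 c2 : K) n N :
  transcendental_over iota x -> iota a * x ^+ n + iota b * y ^+ n = 1 ->
  b != 0 -> c2 != 0 -> (0 < n)%N -> (0 < N)%N ->
  iota c1 * x ^+ N = iota c2 * y ^+ N -> False.
Proof.
move=> Htr Hrel b0 c20 n0 N0 H.
pose P : {poly K} := (c1 ^+ n * b ^+ N)%:P * 'X^(N * n) - (c2 ^+ n)%:P * (1 - a%:P * 'X^n) ^+ N.
have P0 : P != 0.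
  apply/negP => /eqP P0; have := congr1 (fun P => P.[0]) P0.
  rewrite /P !hornerE /= !expr0n /= muln_eq0 (negbTE (lt0n_neq0 N0)).
  rewrite (negbTE (lt0n_neq0 n0)) /= !mulr0 subr0 expr1n mulr1 sub0r => /eqP.
  by rewrite oppr_eq0 expf_eq0 (negbTE c20) andbF.
have := Htr _ P0; rewrite /P rmorphB !rmorphM /= !rmorphXn /= rmorphB rmorph1 /=.
rewrite rmorphM /= !map_polyC !map_polyXn !hornerE /=.
have -> : 1 - iota a * x ^+ n = iota b * y ^+ n by rewrite -Hrel; ring.
rewrite map_polyX hornerX.
have -> : iota c1 ^+ n * iota b ^+ N * x ^+ (N * n) = iota b ^+ N * (iota c1 * x ^+ N) ^+ n.
  by rewrite exprMn -exprM; ring.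
rewrite H !exprMn -!exprM [(n * N)%N]mulnC => /eqP; apply; ring.
Qed.

Lemma D1M (L : fieldType) (D : nat -> L -> L) f g :
  Hmul D -> (forall g, D 0%N g = g) -> D 1%N (f * g) = f * D 1%N g + D 1%N f * g.
Proof. by move=> HM H0; rewrite HM !big_ord_recl big_ord0 /= /bump /= !H0 addr0. Qed.

Lemma dconst_iota (K L : fieldType) (iota : {rmorphism K -> L}) (D : nat -> L -> L) c :
  (forall r c, (0 < r)%N -> D r (iota c) = 0) -> dconst D (iota c).
Proof. by move=> Hc i i0 _; apply: Hc. Qed.

Lemma caseGT (K L : fieldType) (iota : {rmorphism K -> L}) (D : nat -> L -> L) (x y : L)
    (a b a' b' : K) n1 f :
  transcendental_over iota x -> Hadd D -> Hmul D -> (forall g, D 0%N g = g) ->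
  (forall r c, (0 < r)%N -> D r (iota c) = 0) -> D 1%N x = 1 ->
  iota a * x ^+ n1.+1 + iota b * y ^+ n1.+1 = 1 ->
  iota a' * x ^+ f.+1 + iota b' * y ^+ f.+1 = 1 ->
  n1.+1%:R != 0 :> L -> f.+1%:R != 0 :> L ->
  a != 0 -> b != 0 -> a' != 0 -> b' != 0 -> x != 0 -> y != 0 -> n1 != f -> False.
Proof.
move=> Htr HA HM H0 Hc Hx1 Hn He n0 e0 a0 b0 a'0 b'0 x0 y0 nf.
have H1c r : (0 < r)%N -> D r 1 = 0 by move=> r0; rewrite -(rmorph1 iota) Hc.
have Dt c g k : D 1%N (iota c * g ^+ k) = iota c * (k%:R * g ^+ k.-1 * D 1%N g).
  rewrite D_mulc //; first by rewrite (D1X g k HM H0) ?H1c.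
  by move=> i i0 _; apply: Hc.
have A : iota a' * (f.+1%:R * x ^+ f * 1) + iota b' * (f.+1%:R * y ^+ f * D 1%N y) = 0.
  by have := congr1 (D 1%N) He; rewrite HA !Dt Hx1 H1c.
have B : iota a * (n1.+1%:R * x ^+ n1 * 1) + iota b * (n1.+1%:R * y ^+ n1 * D 1%N y) = 0.
  by have := congr1 (D 1%N) Hn; rewrite HA !Dt Hx1 H1c.
have Cmb : iota a * x ^+ n1 * iota b' * y ^+ f = iota a' * x ^+ f * iota b * y ^+ n1.
  apply: (mulfI (mulf_neq0 n0 e0)); apply: (from_eq2 B A (k1 := f.+1%:R * iota b' * y ^+ f) (k2 := - (n1.+1%:R * iota b * y ^+ n1))).
  ring.
have xf0 : x ^+ f != 0 by exact: expf_neq0.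
have yf0 : y ^+ f != 0 by exact: expf_neq0.
case: (ltngtP n1 f) nf => // Hlt _.
-
  have [N eN] : exists N, f = (n1 + N.+1)%N by exists (f - n1).-1; rewrite prednK ?subn_gt0 // subnKC // ltnW.
  subst f.
  apply: (@no_pow_rel K L iota x y a b (a' * b) (a * b') n1.+1 N.+1) => //.
    by rewrite mulf_neq0.
  apply: (mulfI (mulf_neq0 (expf_neq0 n1 x0) (expf_neq0 n1 y0))).
  move: Cmb; rewrite !exprD !rmorphM => Cmb.
  apply: (from_eq1 Cmb (k1 := -1)); ring.
- have [N eN] : exists N, n1 = (f + N.+1)%N by exists (n1 - f).-1; rewrite prednK ?subn_gt0 // subnKC // ltnW.
  subst n1.
  apply: (@no_pow_rel K L iota x y a b (a * b') (a' * b) (f + N.+1).+1 N.+1) => //; first by rewrite mulf_neq0.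
  apply: (mulfI (mulf_neq0 xf0 yf0)).
  move: Cmb; rewrite !exprD !rmorphM => Cmb.
  apply: (from_eq1 Cmb (k1 := 1)); ring.
Qed.

Lemma caseLT (K L : fieldType) (iota : {rmorphism K -> L}) (D : nat -> L -> L) (x y : L)
    (a b a' b' : K) n1 f :
  transcendental_over iota x -> Hadd D -> Hmul D -> (forall g, D 0%N g = g) ->
  (forall r c, (0 < r)%N -> D r (iota c) = 0) -> D 1%N x = 1 ->
  iota a * x ^+ n1.+1 + iota b * y ^+ n1.+1 = 1 ->
  x ^+ f.+1 * y ^+ f.+1 = iota b' * x ^+ f.+1 + iota a' * y ^+ f.+1 ->
  n1.+1%:R != 0 :> L -> f.+1%:R != 0 :> L ->
  a != 0 -> b != 0 -> a' != 0 -> b' != 0 -> x != 0 -> y != 0 -> False.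
Proof.
move=> Htr HA HM H0 Hc Hx1 Hn He n0 e0 a0 b0 a'0 b'0 x0 y0.
have H1c r : (0 < r)%N -> D r 1 = 0 by move=> r0; rewrite -(rmorph1 iota) Hc.
have Dt c g k : D 1%N (iota c * g ^+ k) = iota c * (k%:R * g ^+ k.-1 * D 1%N g).
  rewrite D_mulc //; first by rewrite (D1X g k HM H0) ?H1c.
  by move=> i i0 _; apply: Hc.
have A0 : x ^+ f.+1 * (f.+1%:R * y ^+ f * D 1%N y) + f.+1%:R * x ^+ f * 1 * y ^+ f.+1
    = iota b' * (f.+1%:R * x ^+ f * 1) + iota a' * (f.+1%:R * y ^+ f * D 1%N y).
  have := congr1 (D 1%N) He; rewrite D1M // HA !Dt Hx1.
  by rewrite !(D1X _ _ HM H0) ?H1c // Hx1.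
have B : iota a * (n1.+1%:R * x ^+ n1 * 1) + iota b * (n1.+1%:R * y ^+ n1 * D 1%N y) = 0.
  by have := congr1 (D 1%N) Hn; rewrite HA !Dt Hx1 H1c.
have xf0 : x ^+ f != 0 by exact: expf_neq0.
have yf0 : y ^+ f != 0 by exact: expf_neq0.
apply: (@no_pow_rel K L iota x y a b (a * b') (a' * b) n1.+1 (f + n1.+2)) => //.
  by rewrite mulf_neq0.
  by rewrite addn_gt0 orbT.
apply: (mulfI (mulf_neq0 (mulf_neq0 e0 n0) (mulf_neq0 xf0 yf0))).
move: A0 He B; rewrite !rmorphM !exprD !exprSr => A0 He B.
set u := x ^+ f in A0 He B *; set v := y ^+ f in A0 He B *.
set X := u * x; set Y := v * y.
apply: (from_eq3 A0 He B (k1 := - (n1.+1%:R * iota b * y ^+ n1 * X * Y))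
   (k2 := n1.+1%:R * iota b * y ^+ n1 * f.+1%:R * (u * Y + v * D 1%N y * X))
   (k3 := f.+1%:R * iota b' * v * X ^+ 2)).
rewrite /X /Y; ring.
Qed.

Lemma closed_root (K : closedFieldType) (b : K) n : (0 < n)%N -> exists c : K, c ^+ n = b.
Proof.
move=> n0; have : size ('X^n - b%:P : {poly K}) != 1%N.
  by rewrite size_XnsubC // eqSS -lt0n.
move/closed_rootP => [c]; rewrite rootE !hornerE => /eqP.
by move=> h; exists c; apply/eqP; rewrite -subr_eq0 h.
Qed.

Lemma red_form (K : closedFieldType) (i : 'I_3) (c : K) n :
  i != 2 :> 'I_3 -> (1 < n)%N -> 2%:R != 0 :> K ->
  ~ mpoly_irreducible ((c *: 'X_i) ^+ n - 'X_(2 : 'I_3) ^+ n).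
Proof.
move=> i2 n1 two0 [_ Hirr].
set Q := c *: 'X_i - 'X_(2 : 'I_3).
set S := \sum_(j < n) (c *: 'X_i) ^+ (n.-1 - j) * 'X_(2 : 'I_3) ^+ j.
have := Hirr Q S (subrXX _ _ _).
pose ev (t : K) : 'I_3 -> K := fun j => if j == 2 :> 'I_3 then t else 0.
have evQ t : Q.@[ev t] = - t.
  by rewrite /Q mevalB mevalZ !mevalXU /ev (negbTE i2) eqxx mulr0 sub0r.
case=> /msize1_polyC HC.
- have := evQ 1; have := evQ 0; rewrite HC !mevalC => ->.
  by move/eqP; rewrite oppr0 eq_sym oppr_eq0 oner_eq0.
- have HP t : ((c *: 'X_i) ^+ n - 'X_(2 : 'I_3) ^+ n).@[ev t] = - t * S@_0.
    by rewrite (subrXX _ _ n) -/Q -/S mevalM evQ {1}HC mevalC.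
  have ev2 t : ((c *: 'X_i) ^+ n - 'X_(2 : 'I_3) ^+ n).@[ev t] = - t ^+ n.
    rewrite mevalB !rmorphXn /= mevalZ !mevalXU /ev (negbTE i2) eqxx mulr0. rewrite expr0n (negbTE (lt0n_neq0 (ltnW n1))) sub0r //.
  have s1 : S@_0 = 1 by have := HP 1; rewrite ev2 expr1n mulN1r => /oppr_inj.
  have n10 : (0 < n.-1)%N by case: (n) n1 => [|[|m]].
  have [t Ht] := @closed_root K 2%:R n.-1 n10.
  have := HP t; rewrite ev2 s1 mulr1 => /oppr_inj.
  rewrite -(prednK (ltnW n1)) exprS Ht => /eqP; rewrite -subr_eq0.
  have -> : t * 2%:R - t = t by ring.
  move=> /eqP t0; move: Ht; rewrite t0 expr0n (negbTE (lt0n_neq0 n10)) => /eqP.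
  by rewrite eq_sym (negbTE two0).
Qed.

Lemma fermat_ab0 (K : closedFieldType) (a b : K) n :
  (1 < n)%N -> 2%:R != 0 :> K -> mpoly_irreducible (fermat_poly a b n) -> a != 0 /\ b != 0.
Proof.
move=> n1 two0 Hirr; split; apply/negP => /eqP ab0; move: Hirr; rewrite /fermat_poly ab0 scale0r.
- rewrite add0r; have [c <-] := @closed_root K b n (ltnW n1).
  by rewrite -exprZn; apply: red_form.
- rewrite addr0; have [c <-] := @closed_root K a n (ltnW n1).
  by rewrite -exprZn; apply: red_form.
Qed.

Lemma frob_sum (L : fieldType) p j (u v : L) :
  p \in [pchar L] -> (u + v) ^+ (p ^ j) = u ^+ (p ^ j) + v ^+ (p ^ j).
Proof.
move=> Hp; apply: exprDn_pchar.
by rewrite (eq_pnat _ (pcharf_eq Hp)) pnatX pnat_id // (pcharf_prime Hp).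
Qed.

Lemma pow_fix (K : fieldType) (a : K) q j : a ^+ q = a -> a ^+ (q ^ j) = a.
Proof.
move=> Ha; elim: j => [|j IH]; first by rewrite expn0 expr1.
by rewrite expnSr exprM IH Ha.
Qed.

Lemma root_coef (K : fieldType) (a : K) p h j :
  (0 < h)%N -> a ^+ (p ^ h) = a -> (a ^+ (p ^ (h * j - j))) ^+ (p ^ j) = a.
Proof.
move=> h0 Ha; rewrite -exprM -expnD subnK; last by rewrite leq_pmull.
by rewrite expnM pow_fix.
Qed.

Lemma natr_nz (L : fieldType) p m : p \in [pchar L] -> ~~ (p %| m)%N -> m%:R != 0 :> L.
Proof. by move=> Hp; rewrite (dvdn_pcharf Hp). Qed.

Lemma final_lemma (K L : fieldType) (iota : {rmorphism K -> L}) (D : nat -> L -> L) (x y : L)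
   (a b : K) p h n :
  prime p -> (5 < p)%N -> (0 < h)%N -> p \in [pchar L] ->
  a ^+ (p ^ h) = a -> b ^+ (p ^ h) = b -> a != 0 -> b != 0 ->
  transcendental_over iota x -> iota a * x ^+ n + iota b * y ^+ n = 1 ->
  Hadd D -> Hmul D -> (forall g, D 0%N g = g) ->
  (forall r c, (0 < r)%N -> D r (iota c) = 0) -> D 1%N x = 1 ->
  (p %| n.+1)%N -> (3 < n)%N -> x != 0 -> y != 0 ->
  (x * y) ^+ (p ^ h) = iota b * y ^+ n.+1 * x ^+ (p ^ h) + iota a * x ^+ n.+1 * y ^+ (p ^ h) ->
  a + b = 1 /\ n = (p ^ h).-1.
Proof.
move=> pr p5 h0 HpL Ha Hb a0 b0 Htr Hn HA HM H0 Hc Hx1 pn n3 x0 y0 R.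
have pq : (p %| p ^ h)%N by rewrite dvdn_exp.
have q2 : (2 <= p ^ h)%N.
  apply: leq_trans (prime_gt1 pr) _; rewrite -{1}(expn1 p) leq_exp2l ?prime_gt1 //.
have npn : ~~ (p %| n)%N.
  apply/negP => pn'; have := dvdn_sub pn pn'; rewrite subSn // subnn.
  by rewrite dvdn1; move: p5; case: (p) => [|[|]].
have n0L : n%:R != 0 :> L by apply: natr_nz npn.
move: Hn pn npn n0L R; case: n n3 => // n1 _ Hn pn npn n0L R.
have xy0 k : (x ^+ k * y ^+ k) != 0 by rewrite mulf_neq0 // expf_neq0.
have aj0 j : (a ^+ (p ^ (h * j - j))) != 0 by rewrite expf_neq0.
have bj0 j : (b ^+ (p ^ (h * j - j))) != 0 by rewrite expf_neq0.
have hcop e0 : coprime p e0 -> e0%:R != 0 :> L by rewrite prime_coprime // => /(natr_nz HpL).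
case: (ltngtP n1.+2 (p ^ h)) => Hcmp.
-
  set e := (p ^ h - n1.+2)%N.
  have Eq : (p ^ h)%N = (n1.+2 + e)%N by rewrite subnKC // ltnW.
  have epos : (0 < e)%N by rewrite subn_gt0.
  have pe : (p %| e)%N by apply: dvdn_sub.
  have Rel : x ^+ e * y ^+ e = iota b * x ^+ e + iota a * y ^+ e.
    apply: (mulfI (xy0 n1.+2)); move: R; rewrite Eq !exprD exprMn => R.
    by apply: (from_eq1 R (k1 := 1)); rewrite exprMn; ring.
  have [e0 cop Ee] := pfactor_coprime pr epos.
  set j := logn p e in Ee.
  have e00 : (0 < e0)%N by move: epos; rewrite Ee muln_gt0 => /andP[].
  move: (hcop _ cop); case: e0 Ee e00 {cop} => // f Ee _ f0.
  exfalso; apply: (@caseLT K L iota D x y a b (a ^+ (p ^ (h * j - j))) (b ^+ (p ^ (h * j - j))) n1 f) => //.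
  apply: (frob_root (j := j) HpL).
  rewrite frob_sum // !exprMn -!exprM -!rmorphXn !root_coef // -Ee.
  exact: Rel.
-
  set e := (n1.+2 - p ^ h)%N.
  have Eq : (n1.+2)%N = (p ^ h + e)%N by rewrite subnKC // ltnW.
  have epos : (0 < e)%N by rewrite subn_gt0.
  have pe : (p %| e)%N by apply: dvdn_sub.
  have Rel : iota a * x ^+ e + iota b * y ^+ e = 1.
    apply: (mulfI (xy0 (p ^ h)%N)); move: R; rewrite Eq !exprD exprMn => R.
    by apply: (from_eq1 R (k1 := -1)); ring.
  have [e0 cop Ee] := pfactor_coprime pr epos.
  set j := logn p e in Ee.
  have e00 : (0 < e0)%N by move: epos; rewrite Ee muln_gt0 => /andP[].
  have e0le : (e0 <= e)%N by rewrite Ee leq_pmulr // expn_gt0 prime_gt0.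
  move: (hcop _ cop); case: e0 Ee e00 e0le {cop} => // f Ee _ fle f0.
  exfalso; apply: (@caseGT K L iota D x y a b (a ^+ (p ^ (h * j - j))) (b ^+ (p ^ (h * j - j))) n1 f) => //.
  + apply: (frob_root (j := j) HpL).
    rewrite frob_sum // !exprMn -!exprM -!rmorphXn !root_coef // -Ee expr1n.
    exact: Rel.
  + apply/eqP => nf; move: fle q2; rewrite -nf /e; lia.
-
  split; last by rewrite -Hcmp.
  apply: (fmorph_inj iota); rewrite rmorphD rmorph1.
  apply: (mulfI (xy0 n1.+2)); move: R; rewrite -Hcmp exprMn => R.
  by apply: (from_eq1 R (k1 := -1)); ring.
Qed.

Lemma sum6 (L : fieldType) (F : 'I_6 -> L) : \sum_j F j =
  F (@Ordinal 6 0 isT) + F (@Ordinal 6 1 isT) + F (@Ordinal 6 2 isT) + F (@Ordinal 6 3 isT) + F (@Ordinal 6 4 isT) + F (@Ordinal 6 5 isT).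
Proof.
rewrite !big_ord_recl big_ord0 addr0 !addrA.
by congr (_+_+_+_+_+_); congr F; apply: val_inj.
Qed.

Lemma frob_entry0 (L : fieldType) q D (x y : L) nu j :
  frob_matrix q D x y nu ord0 j = (nth 0 (conic_monomials x y) j) ^+ q.
Proof. by rewrite mxE unlift_none. Qed.

Lemma frob_entryS (L : fieldType) q D (x y : L) nu (k : 'I_5) j :
  frob_matrix q D x y nu (lift ord0 k) j = D (nu k) (nth 0 (conic_monomials x y) j).
Proof. by rewrite mxE liftK. Qed.

Lemma rowsum (L : fieldType) (v : 'rV[L]_6) (M : 'M[L]_6) i :
  (v *m M^T) 0 i = \sum_j v 0 j * M i j.
Proof. by rewrite !mxE; apply: eq_bigr => j _; rewrite mxE. Qed.

Lemma classical_min mu : strictly_increasing5 mu -> lex_le5 classical_seq mu.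
Proof.
move=> Hmu.
have Hge : forall k (Hk : (k < 5)%N), (k <= mu (Ordinal Hk))%N.
  elim=> [|k IH] Hk //.
  have Hk' : (k < 5)%N by apply: ltnW.
  apply: leq_ltn_trans (IH Hk') _; apply: Hmu => /=; exact: ltnSn.
have Hge' (i : 'I_5) : (i <= mu i)%N by case: i => i Hi; exact: Hge.
case: (boolP [forall i : 'I_5, classical_seq i == mu i]) => [/forallP H | /forallPn H].
  by left => i; apply/eqP; exact: H.
right.
have Hex : exists k, (k < 5)%N && (k != mu (inord k)).
  case: H => i Hi; exists i; rewrite ltn_ord /=; by rewrite inord_val.
case: (ex_minnP Hex) => k /andP[k5 Hk] Hmin.
exists (Ordinal k5); split.
  move=> i /= Hik; apply/eqP; apply: contraLR Hik => Hne; rewrite -leqNgt.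
  by apply: Hmin; rewrite ltn_ord /= inord_val.
rewrite /classical_seq /= ltn_neqAle.
have -> : Ordinal k5 = inord k by apply: val_inj; rewrite /= inordK.
by rewrite Hk /= -{1}(@inordK 4 k k5) Hge'.
Qed.

Theorem theoremB1
  (p h n : nat) (K : closedFieldType) (a b : K)
  (L : fieldType) (iota : {rmorphism K -> L}) (x y : L) (D : nat -> L -> L) :
  prime p -> (5 < p)%N -> (0 < h)%N -> (3 < n)%N ->
  is_alg_closure_Fp p K ->
  a ^+ (p ^ h) = a -> b ^+ (p ^ h) = b ->
  mpoly_irreducible (fermat_poly a b n) ->
  transcendental_over iota x ->
  iota a * x ^+ n + iota b * y ^+ n = 1 ->
  hasse_derivation iota x D ->
  (p %| n.+1)%N ->
  (frobenius_nonclassical (p ^ h) D x y <-> (a + b = 1 /\ n = (p ^ h).-1)).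
Proof.
move=> pr p5 h0 n3 [HpK _] Ha Hb Hirr Htr Hcurve HD pn.
have two0 : 2%:R != 0 :> K.
  rewrite -(dvdn_pcharf HpK); apply/negP => /(@dvdn_leq p 2 isT) p2; move: p5 p2; lia.
have n1 : (1 < n)%N by lia.
have [a0 b0] := fermat_ab0 n1 two0 Hirr.
have HpL : p \in [pchar L].
  by rewrite !inE pr /= -(rmorph_nat iota) (pcharf0 HpK) rmorph0.
case: HD => H0 HA HM Hc [Hx1 Hx2].
have H1c r : (0 < r)%N -> D r 1 = 0 by move=> r0; rewrite -(rmorph1 iota) Hc.
have x0 : x != 0.
  have := Htr 'X; rewrite -size_poly_eq0 size_polyX map_polyX hornerX; exact.
have y0 : y != 0.
  apply/eqP => y0; move: Hcurve; rewrite y0 expr0n (negbTE (lt0n_neq0 (ltnW n1))) mulr0 addr0 => Hc1.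
  have P0 : a%:P * 'X^n - 1 != 0 :> {poly K}.
    apply/eqP => /(congr1 (fun P => P.[0])); rewrite !hornerE expr0n (negbTE (lt0n_neq0 (ltnW n1))).
    by rewrite mulr0 sub0r => /eqP; rewrite oppr_eq0 oner_eq0.
  have := Htr _ P0; rewrite rmorphB rmorphM /= map_polyC map_polyXn rmorph1 !hornerE Hc1 subrr.
  by rewrite eqxx.
set al := iota a * x ^+ n.+1.
set be := iota b * y ^+ n.+1.
have w0 : x - al != 0.
  have P0 : 'X - a%:P * 'X^(n.+1) != 0 :> {poly K}.
    apply/eqP => H; have := congr1 (fun P : {poly K} => P`_1) H; rewrite coefB coefX coefCM coefXn coef0 /=.
    have -> : (1%N == n.+1) = false by apply/negbTE; rewrite eqSS; lia.
    by rewrite mulr0 subr0 => /eqP; rewrite oner_eq0.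
  have := Htr _ P0; rewrite rmorphB rmorphM /= map_polyX map_polyC map_polyXn !hornerE.
  by [].
have [k Hk] := dvdnP pn.
have Hdiota c : dconst D (iota c) by move=> i i0 _; apply: Hc.
have Hfr f : dconst D (f ^+ n.+1).
  move=> i i0 i5; rewrite Hk mulnC; apply: (D_frob _ _ HM H0 H1c HpL) => //; lia.
have Hal : dconst D al by apply: dconstM => //; apply: Hfr.
have Hbe : dconst D be by apply: dconstM => //; apply: Hfr.
have Hrel : x * y = al * y + be * x.
  by apply: (from_eq1 Hcurve (k1 := - (x * y))); rewrite /al /be !exprS; ring.
set M := frob_matrix (p ^ h) D x y classical_seq.
have Hrow (v : 'rV[L]_6) r (Hr : (r < 5)%N) : (v *m M^T) 0 (lift ord0 (Ordinal Hr)) =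
    v 0 (@Ordinal 6 0 isT) * D r 1 + v 0 (@Ordinal 6 1 isT) * D r x + v 0 (@Ordinal 6 2 isT) * D r y
    + v 0 (@Ordinal 6 3 isT) * D r (x ^+ 2) + v 0 (@Ordinal 6 4 isT) * D r (x * y)
    + v 0 (@Ordinal 6 5 isT) * D r (y ^+ 2).
  by rewrite rowsum sum6 !frob_entryS.
have Hrow0 (v : 'rV[L]_6) : (v *m M^T) 0 ord0 =
    v 0 (@Ordinal 6 0 isT) * 1 ^+ (p ^ h) + v 0 (@Ordinal 6 1 isT) * x ^+ (p ^ h)
    + v 0 (@Ordinal 6 2 isT) * y ^+ (p ^ h)
    + v 0 (@Ordinal 6 3 isT) * (x ^+ 2) ^+ (p ^ h) + v 0 (@Ordinal 6 4 isT) * (x * y) ^+ (p ^ h)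
    + v 0 (@Ordinal 6 5 isT) * (y ^+ 2) ^+ (p ^ h).
  by rewrite rowsum sum6 !frob_entry0.
split.
- move=> Hnc.
  have Hdet : \det M == 0.
    apply: contraT => Hdet; exfalso; apply: Hnc; split; last by move=> mu [Hmu _]; exact: classical_min.
    by split => // i j.
  move: Hdet; rewrite -det_tr => /det0P [v v0 Hv].
  have Hv' r : (r < 5)%N -> v 0 (@Ordinal 6 0 isT) * D r 1 + v 0 (@Ordinal 6 1 isT) * D r x
    + v 0 (@Ordinal 6 2 isT) * D r y
    + v 0 (@Ordinal 6 3 isT) * D r (x ^+ 2) + v 0 (@Ordinal 6 4 isT) * D r (x * y)
    + v 0 (@Ordinal 6 5 isT) * D r (y ^+ 2) = 0.
    by move=> Hr; rewrite -(Hrow v r Hr) Hv mxE.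
  have al0 : al != 0 by rewrite mulf_neq0 ?fmorph_eq0 // expf_neq0.
  have be0 : be != 0 by rewrite mulf_neq0 ?fmorph_eq0 // expf_neq0.
  have [e0 e1 e2 e3 e5] := kernel_lemma HA HM H0 H1c Hx1 Hx2 Hal Hbe Hrel al0 be0 w0 Hv'.
  set v4 := v 0 (@Ordinal 6 4 isT) in e1 e2.
  have v40 : v4 != 0.
    apply: contraNneq v0 => v4z; apply/eqP/rowP => j; rewrite mxE.
    case: j => [[|[|[|[|[|[|j]]]]]] Hj] //; rewrite (bool_irrelevance Hj isT) ?e0 ?e1 ?e2 ?e3 ?e5 //.
    + by rewrite v4z oppr0 mul0r.
    + by rewrite v4z oppr0 mul0r.
  have R : (x * y) ^+ (p ^ h) = iota b * y ^+ n.+1 * x ^+ (p ^ h) + iota a * x ^+ n.+1 * y ^+ (p ^ h).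
    apply: (mulfI v40); have := Hrow0 v; rewrite Hv mxE e0 e1 e2 e3 e5 => R0.
    by apply: (from_eq1 (esym R0) (k1 := 1)); rewrite /al /be -/v4; ring.
  exact: (final_lemma pr p5 h0 HpL Ha Hb a0 b0 Htr Hcurve HA HM H0 Hc Hx1 pn n3 x0 y0 R).
- move=> [Hab Hnq] [[_ Hdet] _]; move: Hdet; rewrite -det_tr => /negP; apply.
  apply/det0P; exists (\row_j nth 0 [:: 0; - be; - al; 0; 1; 0] j).
    apply/eqP => /rowP /(_ (@Ordinal 6 4 isT)); rewrite !mxE /= => /eqP.
    by rewrite oner_eq0.
  apply/rowP => i; rewrite [RHS]mxE.
  case: (unliftP ord0 i) => [kk ->|->].
    case: kk => r Hr; rewrite Hrow !mxE /=.
    by apply: (from_eq1 (osc_rel HA HM H0 Hal Hbe Hrel Hr) (k1 := 1)); ring.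
  have Hq : n.+1 = (p ^ h)%N by rewrite Hnq prednK // expn_gt0 prime_gt0.
  have Hi : iota a + iota b = 1 by rewrite -rmorphD Hab rmorph1.
  rewrite Hrow0 !mxE /= /al /be Hq.
  apply: (from_eq1 Hi (k1 := - (x ^+ (p ^ h) * y ^+ (p ^ h)))).
  rewrite !(mul0r, add0r, addr0, subr0) mul1r exprMn; ring.
Qed.
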